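(* An oval in $\mathbb{R}^{2}$ is an ellipse centered at the origin if and only if its support function $h$ satisfies $(h^{2})'''+4(h^{2})'=0$.
   Context: Identify $\mathbb{R}^{2}\cong\mathbb{C}$. An oval is a $C^{2}$ embedded closed plane curve with nowhere-vanishing curvature. The support function of an oval $\mathcal{O}$ is $h(\theta)=\sup_{p\in\mathcal{O}}p\cdot e^{i\theta}$, regarded as a $2\pi$-periodic function of $\theta\in\mathbb{R}$. *)

(* Defs.v *)
From Stdlib Require Import Reals.
From Coquelicot Require Import Coquelicot.
Open Scope R_scope.

Definition C2 (f : R -> R) : Prop :=
  forall t, ex_derive f t /\ ex_derive (Derive f) t /\
            continuous (Derive (Derive f)) t.

(* (x,y) is a C^2 parametrization of an oval with period L > 0:
   C^2, L-periodic (closed), injective on one period (embedded),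
   regular, and with nowhere-vanishing curvature
   kappa = (x'y'' - y'x'') / |gamma'|^3. *)
Definition is_oval_param (x y : R -> R) (L : R) : Prop :=
  0 < L /\ C2 x /\ C2 y /\
  (forall t, x (t + L) = x t /\ y (t + L) = y t) /\
  (forall s t, 0 <= s < L -> 0 <= t < L -> x s = x t -> y s = y t -> s = t) /\
  (forall t, Derive x t <> 0 \/ Derive y t <> 0) /\
  (forall t, (Derive x t * Derive (Derive y) t
              - Derive y t * Derive (Derive x) t)
             / (Rsqr (Derive x t) + Rsqr (Derive y t)) ^ 3 <> 0 ).

Definition curve_image (x y : R -> R) : (R * R) -> Prop :=
  fun p => exists t, p = (x t, y t).

Definition support_fun (O : (R * R) -> Prop) (theta : R) : R :=
  real (Lub_Rbar (fun r => exists p, O p /\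
                     r = fst p * cos theta + snd p * sin theta)).

Definition is_centered_ellipse (O : (R * R) -> Prop) : Prop :=
  exists a b phi, 0 < a /\ 0 < b /\
    forall p, O p <->
      exists s, p = (a * cos s * cos phi - b * sin s * sin phi,
                     a * cos s * sin phi + b * sin s * cos phi).

Definition sq_support_ode (h : R -> R) : Prop :=
  let g := fun theta => (h theta) ^ 2 in
  forall theta,
    ex_derive g theta /\ ex_derive_n g 2 theta /\ ex_derive_n g 3 theta /\
    Derive_n g 3 theta + 4 * Derive g theta = 0.

(* Main.v *)
Require Import Defs.
From Stdlib Require Import Reals.
From Coquelicot Require Import Coquelicot.
From Stdlib Require Import Lra Psatz ZArith ClassicalEpsilon.
Open Scope R_scope.

Lemma polar (u v : R) : exists al,
  u = sqrt (u*u+v*v) * cos al /\ v = sqrt (u*u+v*v) * sin al.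
Proof.
  destruct (Req_dec (u*u+v*v) 0) as [H0|H0].
  - exists 0. rewrite H0, sqrt_0. nra.
  - set (r := sqrt (u*u+v*v)).
    assert (Hr : 0 < r) by (apply sqrt_lt_R0; nra).
    assert (Hr2 : r * r = u*u+v*v) by (apply sqrt_sqrt; nra).
    set (c := u / r).
    assert (Hc : -1 <= c <= 1).
    { unfold c. split.
      - apply (Rmult_le_reg_r r); [lra|]. unfold Rdiv. rewrite Rmult_assoc, Rinv_l; [|lra]. nra.
      - apply (Rmult_le_reg_r r); [lra|]. unfold Rdiv. rewrite Rmult_assoc, Rinv_l; [|lra]. nra. }
    assert (Hu : u = r * c) by (unfold c; field; lra).
    assert (Hs : sqrt (1 - c²) = Rabs v / r).
    { apply Rsqr_inj.
      - apply sqrt_pos.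
      - apply Rmult_le_pos; [apply Rabs_pos| left; apply Rinv_0_lt_compat; lra].
      - rewrite Rsqr_sqrt; [| unfold Rsqr; nra].
        unfold Rsqr.
        assert (Hav: Rabs v * Rabs v = v*v) by (pose proof (pow2_abs v) as Hp; simpl in Hp; lra).
        replace (Rabs v / r * (Rabs v / r)) with ((Rabs v * Rabs v)/(r*r)) by (field; lra).
        rewrite Hav.
        assert (c * c = (u*u)/(r*r)) by (unfold c; field; lra).
        rewrite H, Hr2. field. lra. }
    destruct (Rle_lt_dec 0 v) as [Hv|Hv].
    + exists (acos c). rewrite cos_acos, sin_acos; auto. rewrite Hs, Rabs_right; [|lra].
      split; [lra|]. field; lra.
    + exists (- acos c). rewrite cos_neg, sin_neg, cos_acos, sin_acos; auto.
      rewrite Hs, Rabs_left; [|lra]. split; [lra|]. field; lra.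
Qed.

Definition ee (th : R) (p : R * R) : R := fst p * cos th + snd p * sin th.

Lemma sup_attained (O : R * R -> Prop) th p :
  O p -> (forall q, O q -> ee th q <= ee th p) -> support_fun O th = ee th p.
Proof.
  intros Hp Hq. unfold support_fun.
  rewrite (is_lub_Rbar_unique _ (Finite (ee th p))); [reflexivity|].
  split.
  - intros r [q [Oq ->]]. simpl. apply Hq. exact Oq.
  - intros b Hb. apply Hb. exists p. split; auto.
Qed.

Lemma no_periodic (f : R -> R) (P : R) : 0 < P ->
  (forall s, 0 <= s <= P -> continuity_pt f s) -> f 0 = f P ->
  exists s1 s2, f s1 = f s2 /\
   ((s1 = 0 /\ s2 = P/2) \/ (0 < s1 < P/2 /\ P/2 < s2 < P)).
Proof.
  intros HP Hc Hper.
  destruct (Req_dec (f (P/2)) (f 0)) as [E|NE].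
  { exists 0, (P/2). split; [auto|left; auto]. }
  assert (Hcm : forall v, forall s, 0 <= s <= P -> continuity_pt (fun t => f t - v) s).
  { intros v s Hs. apply continuity_pt_minus; [apply Hc; auto| apply continuity_pt_const; intros ??; auto]. }
  assert (Hcm' : forall v, forall s, 0 <= s <= P -> continuity_pt (fun t => v - f t) s).
  { intros v s Hs. apply continuity_pt_minus; [apply continuity_pt_const; intros ??; auto|apply Hc; auto]. }
  set (v := (f 0 + f (P/2)) / 2).
  destruct (Rlt_or_le (f 0) (f (P/2))) as [Hlt|Hle].
  - destruct (Ranalysis5.IVT_interv (fun t => f t - v) 0 (P/2)) as [z1 [Hz1 Ez1]].
    { intros a Ha. apply Hcm. lra. } { lra. } { unfold v; lra. } { unfold v; lra. }
    destruct (Ranalysis5.IVT_interv (fun t => v - f t) (P/2) P) as [z2 [Hz2 Ez2]].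
    { intros a Ha. apply Hcm'. lra. } { lra. } { unfold v; lra. } { unfold v; lra. }
    exists z1, z2. split; [lra|right].
    assert (z1 <> 0) by (intro; subst; unfold v in Ez1; lra).
    assert (z1 <> P/2) by (intro; subst; unfold v in Ez1; lra).
    assert (z2 <> P/2) by (intro; subst; unfold v in Ez2; lra).
    assert (z2 <> P) by (intro; subst; unfold v in Ez2; lra).
    lra.
  - assert (Hlt : f (P/2) < f 0) by lra.
    destruct (Ranalysis5.IVT_interv (fun t => v - f t) 0 (P/2)) as [z1 [Hz1 Ez1]].
    { intros a Ha. apply Hcm'. lra. } { lra. } { unfold v; lra. } { unfold v; lra. }
    destruct (Ranalysis5.IVT_interv (fun t => f t - v) (P/2) P) as [z2 [Hz2 Ez2]].
    { intros a Ha. apply Hcm. lra. } { lra. } { unfold v; lra. } { unfold v; lra. }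
    exists z1, z2. split; [lra|right].
    assert (z1 <> 0) by (intro; subst; unfold v in Ez1; lra).
    assert (z1 <> P/2) by (intro; subst; unfold v in Ez1; lra).
    assert (z2 <> P/2) by (intro; subst; unfold v in Ez2; lra).
    assert (z2 <> P) by (intro; subst; unfold v in Ez2; lra).
    lra.
Qed.

Ltac fixD H := match goal with |- context [Derive ?f ?t] => rewrite (is_derive_unique f t _ (H t)) end.

Lemma deriv_cont f t : ex_derive f t -> continuity_pt f t.
Proof. intros H. apply continuity_pt_filterlim. apply (ex_derive_continuous f t H). Qed.

Lemma deriv_zero_const (F : R -> R) : (forall t, is_derive F t 0) -> forall t, F t = F 0.
Proof.
  intros H t.
  destruct (MVT_gen F 0 t (fun _ => 0)) as [c [_ Hc]].
  - intros; apply H.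
  - intros x _. apply deriv_cont. eexists; apply H.
  - lra.
Qed.

Lemma ode_sol (g : R -> R) :
  (forall th, ex_derive g th /\ ex_derive_n g 2 th /\ ex_derive_n g 3 th /\
              Derive_n g 3 th + 4 * Derive g th = 0) ->
  exists A B C, forall th, g th = A + B * cos (2*th) + C * sin (2*th).
Proof.
  intros H.
  set (u := Derive g). set (u1 := Derive u). set (u2 := Derive u1).
  assert (Hg : forall t, is_derive g t (u t)).
  { intros t. apply Derive_correct. apply H. }
  assert (Hu : forall t, is_derive u t (u1 t)).
  { intros t. apply Derive_correct. destruct (H t) as [_ [H2 _]]. exact H2. }
  assert (Hu1 : forall t, is_derive u1 t (u2 t)).
  { intros t. apply Derive_correct. destruct (H t) as [_ [_ [H3 _]]]. exact H3. }
  assert (Heq : forall t, u2 t = - 4 * u t).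
  { intros t. destruct (H t) as [_ [_ [_ H4]]]. change (u2 t + 4 * u t = 0) in H4. lra. }
  set (c1 := u 0). set (c2 := u1 0 / 2).
  set (w := fun t => u t - c1 * cos (2*t) - c2 * sin (2*t)).
  set (w1 := fun t => u1 t + 2 * c1 * sin (2*t) - 2 * c2 * cos (2*t)).
  assert (Hw : forall t, is_derive w t (w1 t)).
  { intros t. unfold w, w1. auto_derive.
    - eexists; apply Hu.
    - fixD Hu. ring. }
  assert (Hw1 : forall t, is_derive w1 t (-4 * w t)).
  { intros t. unfold w, w1. auto_derive.
    - eexists; apply Hu1.
    - fixD Hu1. rewrite Heq. ring. }
  assert (HE : forall t, w1 t * w1 t + 4 * (w t * w t) = w1 0 * w1 0 + 4 * (w 0 * w 0)).
  { apply (deriv_zero_const (fun t => w1 t * w1 t + 4 * (w t * w t))).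
    intros t. auto_derive.
    - repeat split; eexists; first [apply Hw1|apply Hw].
    - fixD Hw1. fixD Hw. ring. }
  assert (Hw0 : forall t, w t = 0).
  { intros t. specialize (HE t).
    assert (w 0 = 0) by (unfold w, c1; rewrite Rmult_0_r, cos_0, sin_0; ring).
    assert (w1 0 = 0) by (unfold w1, c2; rewrite Rmult_0_r, cos_0, sin_0; field).
    rewrite H0, H1 in HE. nra. }
  set (G := fun t => g t - (c1 / 2) * sin (2*t) + (c2 / 2) * cos (2*t)).
  assert (HG : forall t, G t = G 0).
  { apply deriv_zero_const. intros t. unfold G.
    apply (is_derive_ext (fun t => g t - (c1 / 2) * sin (2*t) + (c2 / 2) * cos (2*t))); [auto|].
    auto_derive.
    - eexists; apply Hg.
    - fixD Hg. specialize (Hw0 t). unfold w in Hw0. lra. }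
  exists (G 0), (- (c2/2)), (c1/2). intros th. specialize (HG th). unfold G in HG at 1. lra.
Qed.

Definition Eu a b phi s : R * R :=
  (a * cos s * cos phi - b * sin s * sin phi, a * cos s * sin phi + b * sin s * cos phi).
Definition hE a b phi th : R :=
  sqrt ((a * cos (th-phi)) * (a * cos (th-phi)) + (b * sin (th-phi)) * (b * sin (th-phi))).

Lemma ee_rot th phi p :
  ee th p = (fst p * cos phi + snd p * sin phi) * cos (th - phi)
            + (- fst p * sin phi + snd p * cos phi) * sin (th - phi).
Proof.
  unfold ee. rewrite cos_minus, sin_minus.
  pose proof (sin2_cos2 phi) as H. unfold Rsqr in H.
  destruct p as [p1 p2]; simpl.
  transitivity ((p1 * cos th + p2 * sin th) * (sin phi * sin phi + cos phi * cos phi)); [rewrite H; ring| ring].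
Qed.

Lemma ee_Eu th a b phi s :
  ee th (Eu a b phi s) = a * cos s * cos (th - phi) + b * sin s * sin (th - phi).
Proof.
  rewrite (ee_rot th phi). unfold Eu; simpl.
  pose proof (sin2_cos2 phi) as H. unfold Rsqr in H.
  transitivity ((a * cos s * cos (th - phi) + b * sin s * sin (th - phi)) * (sin phi * sin phi + cos phi * cos phi)); [ring| rewrite H; ring].
Qed.

Lemma le_sqrt_of_sq x y : x * x <= y -> x <= sqrt y.
Proof.
  intros H. destruct (Rle_or_lt x 0) as [Hx|Hx].
  - pose proof (sqrt_pos y). lra.
  - assert (Hy : 0 <= y) by nra. pose proof (sqrt_sqrt y Hy). pose proof (sqrt_pos y).
    destruct (Rle_or_lt x (sqrt y)); [auto|nra].
Qed.

Lemma ellipse_support a b phi th :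
  (forall s, ee th (Eu a b phi s) <= hE a b phi th) /\
  exists s, ee th (Eu a b phi s) = hE a b phi th.
Proof.
  split.
  - intros s. rewrite ee_Eu. unfold hE. apply le_sqrt_of_sq.
    pose proof (sin2_cos2 s) as H. unfold Rsqr in H.
    set (c := cos (th - phi)). set (d := sin (th - phi)).
    pose proof (Rle_0_sqr (a*c*sin s - b*d*cos s)) as Hq; unfold Rsqr in Hq.
    assert (Hid : (a * cos s * c + b * sin s * d) * (a * cos s * c + b * sin s * d)
      + (a*c*sin s - b*d*cos s) * (a*c*sin s - b*d*cos s)
      = (a * c * (a * c) + b * d * (b * d)) * (sin s * sin s + cos s * cos s)) by ring.
    rewrite H in Hid. lra.
  - destruct (polar (a * cos (th - phi)) (b * sin (th - phi))) as [s [H1 H2]].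
    exists s. rewrite ee_Eu. unfold hE.
    set (r := sqrt _) in *.
    pose proof (sin2_cos2 s) as H. unfold Rsqr in H.
    transitivity (a * cos (th - phi) * cos s + b * sin (th - phi) * sin s); [ring|].
    rewrite H1 at 1. rewrite H2 at 1.
    transitivity (r * (sin s * sin s + cos s * cos s)); [ring| rewrite H; ring].
Qed.

Lemma support_ellipse O a b phi :
  (forall p, O p <-> exists s, p = Eu a b phi s) ->
  forall th, support_fun O th = hE a b phi th.
Proof.
  intros HO th. destruct (ellipse_support a b phi th) as [Hle [s Hs]].
  rewrite (sup_attained O th (Eu a b phi s)).
  - exact Hs.
  - apply HO. exists s. reflexivity.
  - intros q Hq. apply HO in Hq. destruct Hq as [s' ->]. rewrite Hs. apply Hle.
Qed.

Lemma forward O : is_centered_ellipse O -> sq_support_ode (support_fun O).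
Proof.
  intros [a [b [phi [Ha [Hb HO]]]]].
  assert (HO' : forall p, O p <-> exists s, p = Eu a b phi s) by exact HO.
  pose proof (support_ellipse O a b phi HO') as Hs.
  set (G := fun th => (a * cos (th-phi)) * (a * cos (th-phi)) + (b * sin (th-phi)) * (b * sin (th-phi))).
  set (G1 := fun th => 2 * (b*b - a*a) * cos (th-phi) * sin (th-phi)).
  set (G2 := fun th => 2 * (b*b - a*a) * (cos (th-phi) * cos (th-phi) - sin (th-phi) * sin (th-phi))).
  set (G3 := fun th => - 8 * (b*b - a*a) * cos (th-phi) * sin (th-phi)).
  assert (Hg : forall th, (support_fun O th) ^ 2 = G th).
  { intros th. rewrite Hs. unfold hE, G. simpl. rewrite Rmult_1_r. apply sqrt_sqrt. nra. }
  assert (D1 : forall t, is_derive G t (G1 t)) by (intros t; unfold G, G1; auto_derive; [auto|unfold Rminus; ring]).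
  assert (D2 : forall t, is_derive G1 t (G2 t)) by (intros t; unfold G1, G2; auto_derive; [auto|unfold Rminus; ring]).
  assert (D3 : forall t, is_derive G2 t (G3 t)) by (intros t; unfold G2, G3; auto_derive; [auto|unfold Rminus; ring]).
  set (g := fun theta => support_fun O theta ^ 2).
  assert (E0 : forall t, g t = G t) by exact Hg.
  assert (E1 : forall t, Derive_n g 1 t = G1 t).
  { intros t. simpl. erewrite Derive_ext; [apply is_derive_unique, D1|]. intros; apply E0. }
  assert (E2 : forall t, Derive_n g 2 t = G2 t).
  { intros t. change (Derive (Derive_n g 1) t = G2 t). erewrite Derive_ext; [apply is_derive_unique, D2|]. intros; apply E1. }
  assert (E3 : forall t, Derive_n g 3 t = G3 t).
  { intros t. change (Derive (Derive_n g 2) t = G3 t). erewrite Derive_ext; [apply is_derive_unique, D3|]. intros; apply E2. }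
  intros th. fold g. split; [|split; [|split]].
  - apply (ex_derive_ext G); [intros; symmetry; apply E0|]. eexists; apply D1.
  - apply (ex_derive_ext G1); [intros; symmetry; apply E1|]. eexists; apply D2.
  - apply (ex_derive_ext G2); [intros; symmetry; apply E2|]. eexists; apply D3.
  - rewrite E3. assert (Derive g th = G1 th) by apply E1. rewrite H. unfold G1, G3. ring.
Qed.

Definition curve_ok (x y : R -> R) (L : R) : Prop :=
  0 < L /\ (forall t, ex_derive x t) /\ (forall t, ex_derive y t) /\
  (forall t, x (t + L) = x t /\ y (t + L) = y t) /\
  (forall s t, 0 <= s < L -> 0 <= t < L -> x s = x t -> y s = y t -> s = t).

Lemma oval_ok x y L : is_oval_param x y L -> curve_ok x y L.
Proof.
  intros [HL [Cx [Cy [Hp [Hi _]]]]].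
  repeat split; auto.
  - intros t; apply Cx.  - intros t; apply Cy.
  - apply Hp.  - apply Hp.
Qed.

Lemma per_Z x y L : curve_ok x y L -> forall k t, x (t + IZR k * L) = x t /\ y (t + IZR k * L) = y t.
Proof.
  intros [HL [_ [_ [Hp _]]]] k.
  induction k using Z.peano_ind; intros t.
  - replace (t + IZR 0 * L) with t by (simpl; ring). auto.
  - rewrite succ_IZR. replace (t + (IZR k + 1) * L) with ((t + L) + IZR k * L) by ring.
    destruct (IHk (t + L)) as [H1 H2]. rewrite H1, H2. apply Hp.
  - rewrite <- Z.sub_1_r, minus_IZR. replace (t + (IZR k - 1) * L) with ((t - L) + IZR k * L) by ring.
    destruct (IHk (t - L)) as [H1 H2]. rewrite H1, H2.
    destruct (Hp (t - L)) as [H3 H4]. replace (t - L + L) with t in H3, H4 by ring. auto.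
Qed.

Lemma reduce x y L : curve_ok x y L -> forall t0 t, exists k,
  t0 <= t - IZR k * L < t0 + L /\ x (t - IZR k * L) = x t /\ y (t - IZR k * L) = y t.
Proof.
  intros H t0 t. pose proof H as [HL _].
  destruct (archimed ((t - t0) / L)) as [H1 H2].
  set (k := (up ((t - t0)/L) - 1)%Z).
  exists k.
  assert (Hk : IZR k = IZR (up ((t - t0) / L)) - 1) by (unfold k; rewrite minus_IZR; reflexivity).
  split.
  - rewrite Hk. assert (Hr : (t - t0) = (t - t0)/L * L) by (field; lra).
    split.
    + assert ((IZR (up ((t - t0) / L)) - 1) * L <= (t-t0)/L * L) by (apply Rmult_le_compat_r; lra). lra.
    + assert ((t-t0)/L * L < (IZR (up ((t - t0) / L))) * L) by (apply Rmult_lt_compat_r; lra). nra.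
  - replace (t - IZR k * L) with (t + IZR (- k) * L) by (rewrite opp_IZR; ring).
    apply (per_Z x y L H).
Qed.

Lemma inj_shift x y L : curve_ok x y L -> forall t0 s t,
  t0 <= s < t0 + L -> t0 <= t < t0 + L -> x s = x t -> y s = y t -> s = t.
Proof.
  intros H t0 s t Hs Ht Ex Ey. pose proof H as [HL [_ [_ [_ Hi]]]].
  destruct (reduce x y L H 0 s) as [ks [Hs' [Xs Ys]]].
  destruct (reduce x y L H 0 t) as [kt [Ht' [Xt Yt]]].
  assert (E : s - IZR ks * L = t - IZR kt * L).
  { apply Hi; [lra|lra|congruence|congruence]. }
  assert (Hd : (IZR ks - IZR kt) * L = s - t) by lra.
  assert (-1 < IZR ks - IZR kt < 1).
  { split; apply (Rmult_lt_reg_r L); lra. }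
  rewrite <- minus_IZR in H0. destruct H0 as [H0 H1].
  apply lt_IZR in H0. apply lt_IZR in H1.
  assert (ks = kt)%Z by lia. subst kt. lra.
Qed.

Lemma image_char x y L : curve_ok x y L -> forall t0 p,
  curve_image x y p <-> exists t, t0 <= t < t0 + L /\ p = (x t, y t).
Proof.
  intros H t0 p. split.
  - intros [t ->]. destruct (reduce x y L H t0 t) as [k [Hk [E1 E2]]].
    exists (t - IZR k * L). split; auto. rewrite E1, E2. reflexivity.
  - intros [t [_ ->]]. exists t. reflexivity.
Qed.

Lemma max_dir x y L : curve_ok x y L -> forall th, exists t,
  support_fun (curve_image x y) th = ee th (x t, y t) /\
  forall t', ee th (x t', y t') <= ee th (x t, y t).
Proof.
  intros H th. pose proof H as [HL [Dx [Dy _]]].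
  destruct (continuity_ab_maj (fun t => ee th (x t, y t)) 0 L) as [M [HM HM']].
  - lra.
  - intros c _. apply deriv_cont. unfold ee; simpl. auto_derive. split; auto.
  - assert (Hall : forall t', ee th (x t', y t') <= ee th (x M, y M)).
    { intros t'. destruct (reduce x y L H 0 t') as [k [Hk [E1 E2]]].
      rewrite <- E1, <- E2. apply HM. lra. }
    exists M. split; auto.
    apply sup_attained.
    + exists M. reflexivity.
    + intros q [t ->]. apply Hall.
Qed.

Lemma cont_bound (f g1 g2 : R -> R) B t0 : 0 <= B -> continuity_pt g1 t0 -> continuity_pt g2 t0 ->
  (forall t, Rabs (f t - f t0) <= B * (Rabs (g1 t - g1 t0) + Rabs (g2 t - g2 t0))) ->
  continuity_pt f t0.
Proof.
  intros HB C1 C2 Hb eps He.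
  set (e' := eps / (2 * (B + 1))).
  assert (He' : e' > 0) by (unfold e'; apply Rdiv_lt_0_compat; lra).
  destruct (C1 e' He') as [a1 [Ha1 H1]].
  destruct (C2 e' He') as [a2 [Ha2 H2]].
  exists (Rmin a1 a2). split; [apply Rmin_pos; lra|].
  intros t [Ht Hd]. simpl in *. unfold R_dist in *.
  assert (Hd1 : Rabs (t - t0) < a1) by (pose proof (Rmin_l a1 a2); lra).
  assert (Hd2 : Rabs (t - t0) < a2) by (pose proof (Rmin_r a1 a2); lra).
  specialize (H1 t (conj Ht Hd1)). specialize (H2 t (conj Ht Hd2)). simpl in H1, H2. unfold R_dist in H1, H2.
  specialize (Hb t).
  assert (B * (Rabs (g1 t - g1 t0) + Rabs (g2 t - g2 t0)) <= B * (2 * e')).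
  { apply Rmult_le_compat_l; lra. }
  assert (B * (2 * e') < eps).
  { unfold e'. apply (Rmult_lt_reg_r (2 * (B+1))); [lra|].
    replace (B * (2 * (eps / (2 * (B + 1)))) * (2 * (B + 1))) with (2 * B * eps) by (field; lra). nra. }
  lra.
Qed.

Lemma bound_curve x y L : curve_ok x y L -> exists B, 0 <= B /\ forall t, Rabs (x t) <= B /\ Rabs (y t) <= B.
Proof.
  intros H. pose proof H as [HL [Dx [Dy _]]].
  destruct (continuity_ab_maj (fun t => x t * x t + y t * y t) 0 L) as [M [HM HM']].
  - lra.
  - intros c _. apply deriv_cont. auto_derive. split; auto.
  - exists (1 + (x M * x M + y M * y M)). split; [nra|].
    intros t. destruct (reduce x y L H 0 t) as [k [Hk [E1 E2]]].
    specialize (HM (t - IZR k * L) ltac:(lra)). simpl in HM. rewrite E1, E2 in HM.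
    split; apply Rabs_le; split; nra.
Qed.

Lemma support_cont x y L : curve_ok x y L -> continuity (support_fun (curve_image x y)).
Proof.
  intros H th0.
  destruct (bound_curve x y L H) as [B [HB HBt]].
  apply (cont_bound _ cos sin B); auto.
  - apply continuity_cos.
  - apply continuity_sin.
  - intros th. destruct (max_dir x y L H th0) as [t0 [E0 M0]].
    destruct (max_dir x y L H th) as [t1 [E1 M1]].
    rewrite E0, E1. specialize (M0 t1). specialize (M1 t0).
    unfold ee in *; simpl in *.
    destruct (HBt t0) as [Bx0 By0]. destruct (HBt t1) as [Bx1 By1].
    apply Rabs_le. 
    assert (Ha : forall u v, Rabs (u * v) <= B * Rabs v -> True) by auto.
    assert (K : forall z c, Rabs z <= B -> Rabs (z * c) <= B * Rabs c).
    { intros z c Hz. rewrite Rabs_mult. apply Rmult_le_compat_r; [apply Rabs_pos|auto]. }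
    pose proof (K (x t1) (cos th - cos th0) Bx1). pose proof (K (y t1) (sin th - sin th0) By1).
    pose proof (K (x t0) (cos th - cos th0) Bx0). pose proof (K (y t0) (sin th - sin th0) By0).
    pose proof (Rabs_le_between (x t1 * (cos th - cos th0))). 
    split.
    + pose proof (Rle_abs (- (x t0 * (cos th - cos th0)))). pose proof (Rle_abs (- (y t0 * (sin th - sin th0)))).
      rewrite Rabs_Ropp in H5, H6. nra.
    + pose proof (Rle_abs (x t1 * (cos th - cos th0))). pose proof (Rle_abs (y t1 * (sin th - sin th0))).
      nra.
Qed.

Definition UU a phi (p : R*R) := (fst p * cos phi + snd p * sin phi) / a.
Definition VV b phi (p : R*R) := (- fst p * sin phi + snd p * cos phi) / b.

Lemma recon a b phi p : 0 < a -> 0 < b ->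
  p = (a * UU a phi p * cos phi - b * VV b phi p * sin phi,
       a * UU a phi p * sin phi + b * VV b phi p * cos phi).
Proof.
  intros Ha Hb. destruct p as [p1 p2]. unfold UU, VV; simpl.
  pose proof (sin2_cos2 phi) as H. unfold Rsqr in H.
  f_equal; field_simplify; try lra.
  - transitivity (p1 * (sin phi * sin phi + cos phi * cos phi)); [rewrite H; ring| ring].
  - transitivity (p2 * (sin phi * sin phi + cos phi * cos phi)); [rewrite H; ring| ring].
Qed.

Lemma UV_eq_Eu a b phi p s : 0 < a -> 0 < b -> UU a phi p = cos s -> VV b phi p = sin s -> p = Eu a b phi s.
Proof.
  intros Ha Hb HU HV. rewrite (recon a b phi p Ha Hb). rewrite HU, HV. unfold Eu. f_equal; ring.
Qed.

Lemma UV_Eu a b phi s : 0 < a -> 0 < b -> UU a phi (Eu a b phi s) = cos s /\ VV b phi (Eu a b phi s) = sin s.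
Proof.
  intros Ha Hb. unfold UU, VV, Eu; simpl.
  pose proof (sin2_cos2 phi) as H. unfold Rsqr in H.
  split.
  - replace ((a * cos s * cos phi - b * sin s * sin phi) * cos phi +
      (a * cos s * sin phi + b * sin s * cos phi) * sin phi) with (a * cos s * (sin phi * sin phi + cos phi * cos phi)) by ring.
    rewrite H. field. lra.
  - replace (- (a * cos s * cos phi - b * sin s * sin phi) * sin phi +
      (a * cos s * sin phi + b * sin s * cos phi) * cos phi) with (b * sin s * (sin phi * sin phi + cos phi * cos phi)) by ring.
    rewrite H. field. lra.
Qed.

Lemma ee_UV a b phi al p : 0 < a -> 0 < b ->
  ee al p = a * UU a phi p * cos (al - phi) + b * VV b phi p * sin (al - phi).
Proof.
  intros Ha Hb. rewrite (ee_rot al phi). unfold UU, VV. field. lra.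
Qed.

Lemma hE_sq a b phi th : hE a b phi th * hE a b phi th =
  (a * cos (th-phi)) * (a * cos (th-phi)) + (b * sin (th-phi)) * (b * sin (th-phi)).
Proof. unfold hE. apply sqrt_sqrt. nra. Qed.

Lemma hE_pos a b phi th : 0 <= hE a b phi th.
Proof. apply sqrt_pos. Qed.

Lemma inside x y L a b phi : curve_ok x y L -> 0 < a -> 0 < b ->
  (forall th, support_fun (curve_image x y) th = hE a b phi th) ->
  forall t, UU a phi (x t, y t) ^ 2 + VV b phi (x t, y t) ^ 2 <= 1.
Proof.
  intros H Ha Hb Hh t.
  set (p := (x t, y t)). set (U := UU a phi p). set (V := VV b phi p).
  destruct (polar (U / a) (V / b)) as [be [H1 H2]].
  set (r := sqrt _) in *.
  assert (Hr : 0 <= r) by apply sqrt_pos.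
  set (al := be + phi).
  assert (Hal : al - phi = be) by (unfold al; ring).
  assert (Hle : ee al p <= hE a b phi al).
  { rewrite <- Hh. destruct (max_dir x y L H al) as [t1 [E1 M1]]. rewrite E1. apply M1. }
  rewrite (ee_UV a b phi) in Hle; auto. fold U V in Hle. rewrite Hal in Hle.
  pose proof (hE_sq a b phi al) as HS. rewrite Hal in HS.
  pose proof (hE_pos a b phi al) as HP.
  set (H0 := hE a b phi al) in *.
  set (ee0 := a * U * cos be + b * V * sin be) in *.
  assert (Hre : r * ee0 = U * U + V * V).
  { unfold ee0. replace (r * (a * U * cos be + b * V * sin be)) with (a * U * (r * cos be) + b * V * (r * sin be)) by ring.
    rewrite <- H1, <- H2. field. split; lra. }
  assert (Hrh : r * r * (H0 * H0) = U * U + V * V).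
  { rewrite HS. replace (r * r * (a * cos be * (a * cos be) + b * sin be * (b * sin be))) with
      (a * a * ((r * cos be) * (r * cos be)) + b * b * ((r * sin be) * (r * sin be))) by ring.
    rewrite <- H1, <- H2. field. split; lra. }
  simpl. rewrite !Rmult_1_r.
  destruct (Rle_or_lt (U * U + V * V) 1) as [Hs|Hs]; auto.
  exfalso.
  assert (Hr0 : 0 < r) by (destruct (Req_dec r 0) as [E|E]; [rewrite E in Hre; lra| lra]).
  assert (He0 : 0 < ee0) by nra.
  assert (ee0 * ee0 <= H0 * H0) by nra.
  assert (r * r * (ee0 * ee0) <= r * r * (H0 * H0)) by (apply Rmult_le_compat_l; nra).
  nra.
Qed.

Lemma ellipse_in x y L a b phi : curve_ok x y L -> 0 < a -> 0 < b ->
  (forall th, support_fun (curve_image x y) th = hE a b phi th) ->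
  forall s, exists t, (x t, y t) = Eu a b phi s.
Proof.
  intros H Ha Hb Hh s.
  destruct (polar (b * cos s) (a * sin s)) as [be [H1 H2]].
  set (r := sqrt _) in *.
  assert (Hr : 0 <= r) by apply sqrt_pos.
  assert (Hr2 : r * r = b * cos s * (b * cos s) + a * sin s * (a * sin s)) by (apply sqrt_sqrt; nra).
  pose proof (sin2_cos2 s) as Hsc. unfold Rsqr in Hsc.
  assert (Hr0 : 0 < r).
  { destruct (Req_dec r 0) as [E|E]; [|lra]. exfalso. rewrite E in Hr2.
    assert (cos s = 0) by nra. assert (sin s = 0) by nra. nra. }
  set (al := be + phi).
  assert (Hal : al - phi = be) by (unfold al; ring).
  destruct (max_dir x y L H al) as [t [E1 M1]].
  exists t.
  pose proof (inside x y L a b phi H Ha Hb Hh t) as Hin.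
  set (p := (x t, y t)) in *.
  rewrite Hh, (ee_UV a b phi) in E1; auto. rewrite Hal in E1.
  set (U := UU a phi p) in *. set (V := VV b phi p) in *.
  pose proof (hE_sq a b phi al) as HS. rewrite Hal in HS.
  pose proof (hE_pos a b phi al) as HP.
  set (H0 := hE a b phi al) in *.
  assert (Hre : r * H0 = a * b * (U * cos s + V * sin s)).
  { rewrite E1. replace (r * (a * U * cos be + b * V * sin be)) with (a * U * (r * cos be) + b * V * (r * sin be)) by ring.
    rewrite <- H1, <- H2. ring. }
  assert (Hrh : (r * H0) * (r * H0) = (a * b) * (a * b)).
  { replace ((r * H0) * (r * H0)) with (r * r * (H0 * H0)) by ring. rewrite HS.
    replace (r * r * (a * cos be * (a * cos be) + b * sin be * (b * sin be))) with
      (a * a * ((r * cos be) * (r * cos be)) + b * b * ((r * sin be) * (r * sin be))) by ring.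
    rewrite <- H1, <- H2. transitivity (a * a * b * b * (sin s * sin s + cos s * cos s)); [ring| rewrite Hsc; ring]. }
  assert (HrH : r * H0 = a * b).
  { assert (0 <= r * H0) by (apply Rmult_le_pos; lra).
    assert (0 < a * b) by (apply Rmult_lt_0_compat; lra). nra. }
  assert (Hdot : U * cos s + V * sin s = 1).
  { assert (0 < a * b) by (apply Rmult_lt_0_compat; lra).
    apply (Rmult_eq_reg_l (a * b)); [|lra]. lra. }
  simpl in Hin. rewrite !Rmult_1_r in Hin.
  assert (Hz : (U - cos s) * (U - cos s) + (V - sin s) * (V - sin s) <= 0) by nra.
  pose proof (Rle_0_sqr (U - cos s)) as Q1. pose proof (Rle_0_sqr (V - sin s)) as Q2. unfold Rsqr in Q1, Q2.
  assert (Z1 : (U - cos s) * (U - cos s) = 0) by lra.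
  assert (Z2 : (V - sin s) * (V - sin s) = 0) by lra.
  apply Rmult_integral in Z1. apply Rmult_integral in Z2.
  apply UV_eq_Eu; auto; fold U V; lra.
Qed.

Lemma on_boundary a b phi p : 0 < a -> 0 < b ->
  UU a phi p ^ 2 + VV b phi p ^ 2 = 1 -> exists s, p = Eu a b phi s.
Proof.
  intros Ha Hb H1.
  destruct (polar (UU a phi p) (VV b phi p)) as [s [E1 E2]].
  simpl in H1. rewrite !Rmult_1_r in H1. rewrite H1, sqrt_1, Rmult_1_l in E1, E2.
  exists s. apply UV_eq_Eu; auto.
Qed.

Lemma pos_min (F : R -> R) a b : (forall t, a <= t <= b -> continuity_pt F t) ->
  (forall t, a <= t <= b -> 0 < F t) -> exists m, 0 < m /\ forall t, a <= t <= b -> m <= F t.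
Proof.
  intros Hc Hp. destruct (Rle_or_lt a b) as [Hab|Hab].
  - destruct (continuity_ab_min F a b Hab Hc) as [mx [Hm Hmx]].
    exists (F mx). split; [apply Hp; auto| auto].
  - exists 1. split; [lra|]. intros t Ht; lra.
Qed.

Lemma Sq_Eu a b phi s : 0 < a -> 0 < b ->
  UU a phi (Eu a b phi s) ^ 2 + VV b phi (Eu a b phi s) ^ 2 = 1.
Proof.
  intros Ha Hb. destruct (UV_Eu a b phi s Ha Hb) as [-> ->].
  pose proof (sin2_cos2 s) as H. unfold Rsqr in H. simpl. lra.
Qed.

Lemma no_inner x y L a b phi : curve_ok x y L -> 0 < a -> 0 < b ->
  (forall s, exists t, (x t, y t) = Eu a b phi s) ->
  forall t0, UU a phi (x t0, y t0) ^ 2 + VV b phi (x t0, y t0) ^ 2 < 1 -> False.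
Proof.
  intros H Ha Hb Hin t0 Ht0.
  pose proof H as [HL [Dx [Dy [Hp _]]]].
  assert (notE : forall s, (x t0, y t0) <> Eu a b phi s).
  { intros s E. rewrite E, Sq_Eu in Ht0; auto. lra. }
  assert (endL : (x (t0 + L), y (t0 + L)) = (x t0, y t0)).
  { destruct (Hp t0) as [-> ->]. reflexivity. }
  assert (exT : forall s, exists T, t0 < T < t0 + L /\ (x T, y T) = Eu a b phi s).
  { intros s. destruct (Hin s) as [t Et].
    destruct (reduce x y L H t0 t) as [k [Hk [E1 E2]]].
    exists (t - IZR k * L). rewrite E1, E2. split; auto.
    destruct (Req_dec (t - IZR k * L) t0) as [Eq|Ne]; [|lra].
    exfalso. apply (notE s). rewrite <- Eq, E1, E2. auto. }
  assert (uniqT : forall s T1 T2, t0 <= T1 <= t0 + L -> t0 <= T2 <= t0 + L ->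
     (x T1, y T1) = Eu a b phi s -> (x T2, y T2) = Eu a b phi s -> T1 = T2).
  { intros s T1 T2 H1 H2 E1 E2.
    assert (T1 <> t0 + L) by (intro Eq; rewrite Eq, endL in E1; apply (notE s); auto).
    assert (T2 <> t0 + L) by (intro Eq; rewrite Eq, endL in E2; apply (notE s); auto).
    rewrite <- E2 in E1. injection E1 as Ex Ey.
    apply (inj_shift x y L H t0); auto; lra. }
  set (T := fun s => proj1_sig (constructive_indefinite_description _ (exT s))).
  assert (HT : forall s, t0 < T s < t0 + L /\ (x (T s), y (T s)) = Eu a b phi s).
  { intros s. unfold T. destruct (constructive_indefinite_description _ (exT s)) as [Ts HTs]. exact HTs. }
  assert (CT : forall s0, continuity_pt T s0).
  { intros s0 eps He.
    set (T0 := T s0). set (q0 := Eu a b phi s0).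
    destruct (HT s0) as [HT0 ET0]. fold T0 q0 in HT0, ET0.
    set (Dt := fun t => (x t - fst q0) * (x t - fst q0) + (y t - snd q0) * (y t - snd q0)).
    assert (CDt : forall t, continuity_pt Dt t).
    { intros t. apply deriv_cont. unfold Dt. auto_derive. split; auto. }
    assert (PDt : forall t, t0 <= t <= t0 + L -> t <> T0 -> 0 < Dt t).
    { intros t Ht Hne. unfold Dt.
      destruct (Req_dec (x t - fst q0) 0) as [E1|E1]; [destruct (Req_dec (y t - snd q0) 0) as [E2|E2]|].
      - exfalso. apply Hne. apply (uniqT s0); auto; [lra|].
        assert (X1 : x t = fst q0) by lra. assert (X2 : y t = snd q0) by lra.
        rewrite X1, X2. fold q0. symmetry. apply surjective_pairing.
      - pose proof (Rle_0_sqr (x t - fst q0)). unfold Rsqr in *.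
        assert (0 < (y t - snd q0) * (y t - snd q0)) by (apply Rsqr_pos_lt in E2; unfold Rsqr in E2; lra). lra.
      - pose proof (Rle_0_sqr (y t - snd q0)). unfold Rsqr in *.
        assert (0 < (x t - fst q0) * (x t - fst q0)) by (apply Rsqr_pos_lt in E1; unfold Rsqr in E1; lra). lra. }
    destruct (pos_min Dt t0 (T0 - eps)) as [m1 [Hm1 M1]].
    { intros; apply CDt. } { intros t Ht. apply PDt; lra. }
    destruct (pos_min Dt (T0 + eps) (t0 + L)) as [m2 [Hm2 M2]].
    { intros; apply CDt. } { intros t Ht. apply PDt; lra. }
    set (m := Rmin m1 m2).
    assert (Hm : m > 0) by (unfold m; apply Rmin_pos; lra).
    set (Ds := fun s => (fst (Eu a b phi s) - fst q0) * (fst (Eu a b phi s) - fst q0)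
                       + (snd (Eu a b phi s) - snd q0) * (snd (Eu a b phi s) - snd q0)).
    assert (CDs : continuity_pt Ds s0).
    { apply deriv_cont. unfold Ds, Eu; simpl. auto_derive. auto. }
    destruct (CDs m Hm) as [de [Hde HD]].
    exists de. split; auto.
    intros s [Hs Hd]. simpl in Hd |- *. unfold R_dist in Hd |- *.
    specialize (HD s (conj Hs Hd)). simpl in HD. unfold R_dist in HD.
    assert (Ds0 : Ds s0 = 0) by (unfold Ds; fold q0; ring).
    rewrite Ds0, Rminus_0_r in HD.
    destruct (HT s) as [HTs ETs].
    assert (DtDs : Dt (T s) = Ds s) by (unfold Dt, Ds; rewrite <- ETs; reflexivity).
    assert (Hlt : Dt (T s) < m) by (rewrite DtDs; pose proof (Rle_abs (Ds s)); lra).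
    assert (m <= m1) by apply Rmin_l. assert (m <= m2) by apply Rmin_r.
    apply Rabs_def1.
    + destruct (Rlt_or_le (T s - T0) eps) as [Hl|Hl]; auto.
      exfalso. assert (m2 <= Dt (T s)) by (apply M2; lra). lra.
    + destruct (Rlt_or_le (- eps) (T s - T0)) as [Hl|Hl]; auto.
      exfalso. assert (m1 <= Dt (T s)) by (apply M1; lra). lra. }
  assert (Hper : T 0 = T (2 * PI)).
  { destruct (HT 0) as [H1 E1]. destruct (HT (2 * PI)) as [H2 E2].
    apply (uniqT 0); [lra|lra|exact E1|rewrite E2]. unfold Eu. rewrite cos_2PI, sin_2PI, cos_0, sin_0. reflexivity. }
  destruct (no_periodic T (2 * PI)) as [s1 [s2 [Es Hcase]]].
  { pose proof PI_RGT_0; lra. } { intros; apply CT. } { exact Hper. }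
  destruct (HT s1) as [_ E1]. destruct (HT s2) as [_ E2].
  rewrite Es, E2 in E1.
  destruct (UV_Eu a b phi s1 Ha Hb) as [U1 V1]. destruct (UV_Eu a b phi s2 Ha Hb) as [U2 V2].
  rewrite E1 in U2, V2. rewrite U1 in U2. rewrite V1 in V2.
  destruct Hcase as [[-> ->] | [Hs1 Hs2]].
  - replace (2 * PI / 2) with PI in U2 by field. rewrite cos_0, cos_PI in U2. lra.
  - replace (2 * PI / 2) with PI in Hs1, Hs2 by field.
    pose proof (sin_gt_0 s1 ltac:(lra) ltac:(lra)). pose proof (sin_lt_0 s2 ltac:(lra) ltac:(lra)). lra.
Qed.

Lemma ee_neg th p : ee (th + PI) p = - ee th p.
Proof. unfold ee. rewrite neg_cos, neg_sin. ring. Qed.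

Lemma ellipse_of_hE x y L a b phi : curve_ok x y L -> 0 < a -> 0 < b ->
  (forall th, support_fun (curve_image x y) th = hE a b phi th) ->
  is_centered_ellipse (curve_image x y).
Proof.
  intros H Ha Hb Hh.
  pose proof (ellipse_in x y L a b phi H Ha Hb Hh) as Hin.
  exists a, b, phi. split; [auto|split; [auto|]].
  intros p. split.
  - intros [t ->]. pose proof (inside x y L a b phi H Ha Hb Hh t) as Hi.
    destruct (Rle_lt_or_eq_dec _ _ Hi) as [Hlt|Heq].
    + exfalso. apply (no_inner x y L a b phi H Ha Hb Hin t Hlt).
    + exact (on_boundary a b phi _ Ha Hb Heq).
  - intros [s ->]. destruct (Hin s) as [t Et]. exists t. symmetry. exact Et.
Qed.

Lemma line_contra x y L phi : curve_ok x y L ->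
  (forall t, ee (phi + PI/2) (x t, y t) = 0) -> False.
Proof.
  intros H Hl. pose proof H as [HL [Dx [Dy [Hp Hi]]]].
  destruct (no_periodic (fun t => ee phi (x t, y t)) L) as [s1 [s2 [Es Hc]]]; auto.
  - intros s _. apply deriv_cont. unfold ee; simpl. auto_derive. split; auto.
  - destruct (Hp 0) as [E1 E2]. rewrite Rplus_0_l in E1, E2. rewrite E1, E2. reflexivity.
  - assert (Hs : 0 <= s1 < L /\ 0 <= s2 < L /\ s1 < s2).
    { destruct Hc as [[-> ->]|[? ?]]; lra. }
    pose proof (Hl s1) as L1. pose proof (Hl s2) as L2.
    unfold ee in Es, L1, L2; simpl in Es, L1, L2.
    rewrite cos_plus, sin_plus, cos_PI2, sin_PI2 in L1, L2.
    pose proof (sin2_cos2 phi) as Hsc. unfold Rsqr in Hsc.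
    assert (X : x s1 - x s2 = 0).
    { transitivity ((x s1 - x s2) * (sin phi * sin phi + cos phi * cos phi)); [rewrite Hsc; ring|].
      transitivity (((x s1 * cos phi + y s1 * sin phi) - (x s2 * cos phi + y s2 * sin phi)) * cos phi
        - ((x s1 * (cos phi * 0 - sin phi * 1) + y s1 * (sin phi * 0 + cos phi * 1))
          - (x s2 * (cos phi * 0 - sin phi * 1) + y s2 * (sin phi * 0 + cos phi * 1))) * sin phi); [ring|].
      rewrite Es, L1, L2. ring. }
    assert (Y : y s1 - y s2 = 0).
    { transitivity ((y s1 - y s2) * (sin phi * sin phi + cos phi * cos phi)); [rewrite Hsc; ring|].
      transitivity (((x s1 * cos phi + y s1 * sin phi) - (x s2 * cos phi + y s2 * sin phi)) * sin phi
        + ((x s1 * (cos phi * 0 - sin phi * 1) + y s1 * (sin phi * 0 + cos phi * 1))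
          - (x s2 * (cos phi * 0 - sin phi * 1) + y s2 * (sin phi * 0 + cos phi * 1))) * cos phi); [ring|].
      rewrite Es, L1, L2. ring. }
    assert (s1 = s2) by (apply Hi; lra). lra.
Qed.

Lemma support_pos x y L : curve_ok x y L ->
  (forall th, support_fun (curve_image x y) th <> 0) ->
  forall th, 0 < support_fun (curve_image x y) th.
Proof.
  intros H Hnz th.
  set (h := support_fun (curve_image x y)).
  destruct (Rlt_or_le 0 (h th)) as [Hp|Hn]; auto.
  assert (Hneg : h th < 0) by (pose proof (Hnz th); fold h in H0; lra).
  exfalso.
  assert (Hopp : - h th <= h (th + PI)).
  { destruct (max_dir x y L H th) as [t [E M]]. destruct (max_dir x y L H (th + PI)) as [t' [E' M']].
    fold h in E, E'. rewrite E, E'. specialize (M' t). rewrite ee_neg in M'. lra. }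
  destruct (IVT h th (th + PI)) as [z [Hz Ez]].
  - apply (support_cont x y L H).
  - pose proof PI_RGT_0; lra.
  - auto.
  - lra.
  - apply (Hnz z). exact Ez.
Qed.

Lemma converse x y L : curve_ok x y L ->
  sq_support_ode (support_fun (curve_image x y)) -> is_centered_ellipse (curve_image x y).
Proof.
  intros H Hode.
  set (h := support_fun (curve_image x y)) in *.
  destruct (ode_sol (fun th => h th ^ 2) Hode) as [A [B [C Hg]]].
  destruct (polar B C) as [psi [HB HC]].
  set (R0 := sqrt (B * B + C * C)) in *.
  assert (HR : 0 <= R0) by apply sqrt_pos.
  set (phi := psi / 2).
  assert (KF : forall th, h th ^ 2 = (A + R0) * (cos (th - phi) * cos (th - phi))
                                     + (A - R0) * (sin (th - phi) * sin (th - phi))).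
  { intros th. rewrite Hg.
    set (u := th - phi).
    replace (2 * th) with (2 * u + psi) by (unfold u, phi; field).
    rewrite cos_plus, sin_plus, cos_2a, sin_2a, HB, HC.
    pose proof (sin2_cos2 psi) as H1. unfold Rsqr in H1.
    pose proof (sin2_cos2 u) as H2. unfold Rsqr in H2.
    transitivity (A + R0 * (cos u * cos u - sin u * sin u) * (sin psi * sin psi + cos psi * cos psi)); [ring|].
    rewrite H1. transitivity (A * (sin u * sin u + cos u * cos u) + R0 * (cos u * cos u - sin u * sin u)); [rewrite H2; ring| ring]. }
  assert (Hm : h (phi + PI/2) ^ 2 = A - R0).
  { rewrite KF. replace (phi + PI / 2 - phi) with (PI/2) by ring. rewrite cos_PI2, sin_PI2. ring. }
  assert (HAR : 0 <= A - R0) by (rewrite <- Hm; apply pow2_ge_0).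
  destruct (Req_dec (A - R0) 0) as [E0|E0].
  - exfalso.
    assert (Hm' : h (phi + PI/2 + PI) ^ 2 = A - R0).
    { rewrite KF. replace (phi + PI / 2 + PI - phi) with (PI/2 + PI) by ring.
      rewrite neg_cos, neg_sin, cos_PI2, sin_PI2. ring. }
    assert (Z1 : h (phi + PI/2) = 0) by (simpl in Hm; nra).
    assert (Z2 : h (phi + PI/2 + PI) = 0) by (simpl in Hm'; nra).
    apply (line_contra x y L phi H).
    intros t.
    destruct (max_dir x y L H (phi + PI/2)) as [t1 [E1 M1]].
    destruct (max_dir x y L H (phi + PI/2 + PI)) as [t2 [E2 M2]].
    fold h in E1, E2. rewrite Z1 in E1. rewrite Z2 in E2.
    specialize (M1 t). specialize (M2 t). rewrite ee_neg in M2. lra.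
  - assert (Hpos : 0 < A - R0) by lra.
    set (a := sqrt (A + R0)). set (b := sqrt (A - R0)).
    assert (Ha : 0 < a) by (apply sqrt_lt_R0; lra).
    assert (Hb : 0 < b) by (apply sqrt_lt_R0; lra).
    assert (Ha2 : a * a = A + R0) by (apply sqrt_sqrt; lra).
    assert (Hb2 : b * b = A - R0) by (apply sqrt_sqrt; lra).
    assert (Hsq : forall th, h th * h th = hE a b phi th * hE a b phi th).
    { intros th. rewrite hE_sq. pose proof (KF th) as K. simpl in K. rewrite Rmult_1_r in K.
      rewrite K. transitivity ((a * a) * (cos (th - phi) * cos (th - phi)) + (b * b) * (sin (th - phi) * sin (th - phi)));
        [rewrite Ha2, Hb2; ring | ring]. }
    assert (Hnz : forall th, h th <> 0).
    { intros th Z. pose proof (KF th) as K. rewrite Z in K. simpl in K.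
      pose proof (sin2_cos2 (th - phi)) as S. unfold Rsqr in S.
      pose proof (Rle_0_sqr (cos (th - phi))). unfold Rsqr in H0. nra. }
    pose proof (support_pos x y L H Hnz) as Hp.
    apply (ellipse_of_hE x y L a b phi H Ha Hb).
    intros th. fold h. specialize (Hp th). fold h in Hp. specialize (Hsq th).
    pose proof (hE_pos a b phi th). nra.
Qed.

Theorem mainTheorem12 (x y : R -> R) (L : R) :
  is_oval_param x y L ->
  (is_centered_ellipse (curve_image x y) <->
   sq_support_ode (support_fun (curve_image x y))).
Proof.
  intros Hov. pose proof (oval_ok x y L Hov) as H.
  split; [apply forward | apply (converse x y L H)].
Qed.
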